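(* Let $G$ be a finite perfect group (i.e. $G=[G,G]$) and let $I$ be any set. Then the unrestricted direct product $G^I$, viewed as a discrete group, is strongly bounded.
   Context: A group $\Gamma$ is called strongly bounded if for every action of $\Gamma$ by isometries on a metric space, every orbit is bounded. *)

(* Defs.v *)
From mathcomp Require Import all_boot all_fingroup.
From Stdlib Require Import Reals.

Set Implicit Arguments.
Unset Strict Implicit.
Unset Printing Implicit Defensive.

Definition perfect_group (gT : finGroupType) : Prop :=
  ([~: [set: gT], [set: gT]] = [set: gT])%g.

Definition is_metric (X : Type) (d : X -> X -> R) : Prop :=
  (forall x y, d x y = 0%R <-> x = y) /\
  (forall x y, d x y = d y x) /\
  (forall x y z, (d x z <= d x y + d y z)%R).

Definition isometric_action (T X : Type) (mul : T -> T -> T) (one : T)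
    (d : X -> X -> R) (act : T -> X -> X) : Prop :=
  (forall x, act one x = x) /\
  (forall g h x, act (mul g h) x = act g (act h x)) /\
  (forall g x y, d (act g x) (act g y) = d x y).

Definition strongly_bounded (T : Type) (mul : T -> T -> T) (one : T) : Prop :=
  forall (X : Type) (d : X -> X -> R) (act : T -> X -> X),
    is_metric d -> isometric_action mul one d act ->
    forall x : X, exists M : R, forall g h : T, (d (act g x) (act h x) <= M)%R.

Definition prod_mul (I : Type) (gT : finGroupType) (f g : I -> gT) : I -> gT :=
  fun i => (f i * g i)%g.
Definition prod_one (I : Type) (gT : finGroupType) : I -> gT := fun _ => 1%g.

(* Main.v *)
Require Import Defs.
From mathcomp Require Import all_boot all_fingroup.
From Stdlib Require Import Reals ClassicalEpsilon Classical FunctionalExtensionality Lra Lia.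

Set Implicit Arguments.
Unset Strict Implicit.
Unset Printing Implicit Defensive.

Lemma choice_fun (A B : Type) (P : A -> B -> Prop) :
  (forall a, exists b, P a b) -> exists f : A -> B, forall a, P a (f a).
Proof.
move=> H; exists (fun a => proj1_sig (constructive_indefinite_description _ (H a))).
by move=> a; case: (constructive_indefinite_description _ (H a)).
Qed.

Lemma perfect_dec (gT : finGroupType) : perfect_group gT ->
  exists Lg : gT -> seq (gT * gT), forall g, g = (\prod_(p <- Lg g) [~ p.1, p.2])%g.
Proof.
move=> hp; apply: (@choice_fun gT (seq (gT * gT)) (fun g s => g = (\prod_(p <- s) [~ p.1, p.2])%g)) => g.
have : g \in [~: [set: gT], [set: gT]]%g by rewrite hp inE.
case/gen_prodgP=> n [c hc ->].
have : forall i, exists p : gT * gT, c i = [~ p.1, p.2]%g.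
  move=> i; case/imset2P: (hc i) => x y _ _ ->; by exists (x, y).
case/choice_fun=> xy hxy.
exists [seq xy i | i <- index_enum 'I_n]; rewrite big_map.
by apply: eq_bigr => i _; rewrite hxy.
Qed.


Definition pick (P : Prop) (T : Type) (a b : T) : T :=
  if excluded_middle_informative P then a else b.

Lemma pickT (P : Prop) T (a b : T) : P -> pick P a b = a.
Proof. by rewrite /pick; case: excluded_middle_informative. Qed.
Lemma pickF (P : Prop) T (a b : T) : ~ P -> pick P a b = b.
Proof. by rewrite /pick; case: excluded_middle_informative. Qed.

Definition sumR (T : Type) (s : seq T) (w : T -> R) : R :=
  foldr (fun a acc => (w a + acc)%R) 0%R s.

Lemma sumR_le T (s : seq T) (w1 w2 : T -> R) :
  (forall a, (w1 a <= w2 a)%R) -> (sumR s w1 <= sumR s w2)%R.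
Proof. move=> h; elim: s => [|a s IH] /=; [lra|]. have := h a; lra. Qed.

Lemma sumR_add T (s : seq T) (w1 w2 : T -> R) :
  sumR s (fun a => w1 a + w2 a)%R = (sumR s w1 + sumR s w2)%R.
Proof. elim: s => [|a s IH] /=; [lra|]. rewrite IH; lra. Qed.

Lemma sumR_ge0 T (s : seq T) (w : T -> R) :
  (forall a, (0 <= w a)%R) -> (0 <= sumR s w)%R.
Proof. move=> h; elim: s => [|a s IH] /=; [lra|]. have := h a; lra. Qed.

Lemma sumR_mem (T : eqType) (s : seq T) (w : T -> R) a :
  (forall b, (0 <= w b)%R) -> a \in s -> (w a <= sumR s w)%R.
Proof.
move=> h; elim: s => [|b s IH] //=; rewrite inE; case/orP=> [/eqP ->|/IH].
  have := sumR_ge0 s h; lra.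
have := h b; lra.
Qed.

Definition is_len (gT : finGroupType) (I : Type) (len : (I -> gT) -> R) : Prop :=
  [/\ (forall f, 0 <= len f)%R, len (fun _ => 1%g) = 0%R,
      (forall f g, len (prod_mul f g) <= len f + len g)%R &
      (forall f, len (fun i => (f i)^-1)%g = len f)].

Definition supp_in (gT : finGroupType) (I : Type) (A : I -> Prop) (f : I -> gT) :=
  forall i, ~ A i -> f i = 1%g.

Definition bnd (gT : finGroupType) (I : Type) (len : (I -> gT) -> R) (A : I -> Prop) :=
  exists M, forall f, supp_in A f -> (len f <= M)%R.

Lemma len_prod (gT : finGroupType) (I : Type) len (hl : @is_len gT I len)
  (T : Type) (s : seq T) (phi : T -> I -> gT) :
  (len (fun i => \prod_(a <- s) phi a i)%g <= sumR s (fun a => len (phi a)))%R.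
Proof.
case: hl => h0 h1 hm hi.
elim: s => [|a s IH] /=.
  have -> : (fun i => \prod_(a <- [::]) phi a i)%g = (fun _ => 1%g) :> (I -> gT).
    by apply: functional_extensionality => i; rewrite big_nil.
  lra.
have -> : (fun i => \prod_(b <- a :: s) phi b i)%g =
          prod_mul (phi a) (fun i => \prod_(b <- s) phi b i)%g.
  by apply: functional_extensionality => i; rewrite big_cons.
have := hm (phi a) (fun i => \prod_(b <- s) phi b i)%g; lra.
Qed.

Lemma len_comm (gT : finGroupType) (I : Type) len (hl : @is_len gT I len) (f g : I -> gT) :
  (len (fun i => [~ f i, g i])%g <= 2 * len f + 2 * len g)%R.
Proof.
case: hl => h0 h1 hm hi.
have -> : (fun i => [~ f i, g i])%g = prod_mul (fun i => (f i)^-1)%g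
   (prod_mul (prod_mul (fun i => (g i)^-1)%g f) g).
  apply: functional_extensionality => i.
  by rewrite /prod_mul commgEl conjgE !mulgA.
have := hm (fun i => (f i)^-1)%g (prod_mul (prod_mul (fun i => (g i)^-1)%g f) g).
have := hm (prod_mul (fun i => (g i)^-1)%g f) g.
have := hm (fun i => (g i)^-1)%g f.
rewrite !hi; lra.
Qed.

Lemma point_dec (gT : finGroupType) (Lg : gT -> seq (gT * gT))
  (hLg : forall g, g = (\prod_(p <- Lg g) [~ p.1, p.2])%g)
  (X : Prop) (Ft : gT) (a : gT -> gT * gT -> gT) :
  (~ X -> Ft = 1%g) -> (X -> forall g p, a g p = if Ft == g then p.1 else 1%g) ->
  Ft = (\prod_(g : gT) \prod_(p <- Lg g) [~ a g p, pick X p.2 1])%g.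
Proof.
move=> hn ha; case: (classic X) => hX; last first.
  rewrite hn // big1 // => g _; rewrite big1 // => p _.
  by rewrite pickF // commg1.
rewrite (eq_bigr (fun g => if Ft == g then g else 1%g)); last first.
  move=> g _; case: eqP => [<-|ne].
    rewrite {3}(hLg Ft); apply: eq_bigr => p _.
    by rewrite ha // eqxx pickT.
  rewrite big1 // => p _; rewrite ha //.
  have /negbTE -> : Ft != g by apply/eqP.
  by rewrite comm1g.
rewrite -big_mkcond /=.
rewrite (eq_bigl (fun g => g == Ft)); last by move=> g; rewrite eq_sym.
by rewrite big_pred1_eq.
Qed.


Lemma not_bnd_ex (gT : finGroupType) (I : Type) len (A : I -> Prop) (M : R) :
  ~ @bnd gT I len A -> exists f, supp_in A f /\ (len f > M)%R.
Proof.
move=> nb; apply: NNPP => nex; apply: nb; exists M => f hf.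
apply: Rnot_lt_le => hlt; apply: nex; exists f; split => //.
Qed.

Lemma nat_big (r : R) : exists n : nat, (r < INR n)%R.
Proof.
case: (INR_archimed 1 r Rlt_0_1) => n hn; exists n; lra.
Qed.

Lemma disj_family (gT : finGroupType) (I : Type) len (hl : @is_len gT I len)
  (Lg : gT -> seq (gT * gT))
  (hLg : forall g, g = (\prod_(p <- Lg g) [~ p.1, p.2])%g)
  (Xs : nat -> I -> Prop) :
  (forall m n i, Xs m i -> Xs n i -> m = n) -> ~ (forall k, ~ bnd len (Xs k)).
Proof.
move=> hdisj hnb.
have hl' := hl; case: hl' => h0 h1 hm hi.
pose T k := sumR (index_enum gT) (fun g => sumR (Lg g)
               (fun p => 2 * len (fun i => pick (Xs k i) p.2 1%g)))%R.
have : forall k, exists F, supp_in (Xs k) F /\ (len F > INR k + T k)%R.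
  by move=> k; apply: not_bnd_ex.
case/(@choice_fun nat (I -> gT)) => F hF.
pose Ah g (p : gT * gT) i := pick (exists k, Xs k i /\ F k i = g) p.1 1%g.
pose K := sumR (index_enum gT) (fun g => sumR (Lg g) (fun p => 2 * len (Ah g p)))%R.
have hK : forall k, (len (F k) <= K + T k)%R.
  move=> k.
  have -> : F k = (fun i => \prod_(g : gT) \prod_(p <- Lg g)
                     [~ Ah g p i, pick (Xs k i) p.2 1])%g.
    apply: functional_extensionality => i.
    apply: point_dec => //; first by case: (hF k) => hs _; apply: hs.
    move=> hX g p; rewrite /Ah.
    case: (classic (exists k0, Xs k0 i /\ F k0 i = g)) => hE.
      rewrite pickT //; case: hE => k0 [hk0 hFk0].
      by rewrite -(hdisj _ _ _ hk0 hX) hFk0 eqxx.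
    rewrite pickF //; case: eqP => // hFg; case: hE; by exists k.
  apply: Rle_trans; first by apply: len_prod.
  rewrite /K /T -sumR_add; apply: sumR_le => g.
  apply: Rle_trans; first by apply: len_prod.
  rewrite -sumR_add; apply: sumR_le => p.
  by apply: len_comm.
case: (nat_big K) => n hn.
case: (hF n) => _ hFn; have := hK n; lra.
Qed.


Lemma bnd_sub (gT : finGroupType) (I : Type) len (A B : I -> Prop) :
  (forall i, A i -> B i) -> @bnd gT I len B -> bnd len A.
Proof.
move=> hs [M hM]; exists M => f hf; apply: hM => i hB; apply: hf => hA.
by apply: hB; apply: hs.
Qed.

Lemma split_fun (gT : finGroupType) (I : Type) (A : I -> Prop) (f : I -> gT) :
  f = prod_mul (fun i => pick (A i) (f i) 1%g) (fun i => pick (A i) 1%g (f i)).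
Proof.
apply: functional_extensionality => i; rewrite /prod_mul /pick.
by destruct (excluded_middle_informative (A i)); rewrite ?mulg1 ?mul1g.
Qed.

Lemma bnd_union (gT : finGroupType) (I : Type) len (hl : @is_len gT I len)
  (A B : I -> Prop) :
  bnd len A -> bnd len B -> bnd len (fun i => A i \/ B i).
Proof.
case: hl => h0 h1 hm hi.
move=> [MA hA] [MB hB]; exists (MA + MB)%R => f hf.
rewrite (split_fun A f).
have := hm (fun i => pick (A i) (f i) 1%g) (fun i => pick (A i) 1%g (f i)).
have := hA (fun i => pick (A i) (f i) 1%g).
have := hB (fun i => pick (A i) 1%g (f i)).
have s1 : supp_in A (fun i => pick (A i) (f i) 1%g).
  by move=> i hi'; rewrite pickF.
have s2 : supp_in B (fun i => pick (A i) 1%g (f i)).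
  move=> i hi'; rewrite /pick; case: excluded_middle_informative => // hna.
  by apply: hf; case.
move=> /(_ s2) h2 /(_ s1) h3; lra.
Qed.

Lemma bnd_empty (gT : finGroupType) (I : Type) len (hl : @is_len gT I len) :
  bnd len (fun _ => False).
Proof.
case: hl => h0 h1 hm hi; exists 0%R => f hf.
have -> : f = fun _ => 1%g by apply: functional_extensionality => i; apply: hf.
lra.
Qed.

Lemma bnd_bigunion (gT : finGroupType) (I : Type) len (hl : @is_len gT I len)
  (T : eqType) (s : seq T) (A : T -> I -> Prop) :
  (forall a, a \in s -> bnd len (A a)) ->
  bnd len (fun i => exists2 a, a \in s & A a i).
Proof.
elim: s => [|a s IH] hs.
  apply: bnd_sub (bnd_empty hl) => i [b]; by rewrite in_nil.
apply: (@bnd_sub _ _ _ _ (fun i => A a i \/ exists2 b, b \in s & A b i)).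
  move=> i [b]; rewrite inE; case/orP => [/eqP -> |hb] hAb; [by left|right].
  by exists b.
apply: bnd_union => //; first by apply: hs; rewrite inE eqxx.
by apply: IH => b hb; apply: hs; rewrite inE hb orbT.
Qed.

Definition ultra (gT : finGroupType) (I : Type) len (Y : I -> Prop) :=
  forall A : I -> Prop, @bnd gT I len (fun i => Y i /\ A i) \/ bnd len (fun i => Y i /\ ~ A i).

Lemma ultra_exists (gT : finGroupType) (I : Type) len (hl : @is_len gT I len)
  (hL2 : forall Xs : nat -> I -> Prop,
     (forall m n i, Xs m i -> Xs n i -> m = n) -> ~ (forall k, ~ bnd len (Xs k)))
  (Y : I -> Prop) : ~ bnd len Y ->
  exists Y0, ~ bnd len Y0 /\ ultra len Y0.
Proof.
move=> nbY; apply: NNPP => hne.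
have hsplit : forall Z, exists A : I -> Prop, ~ bnd len Z ->
    ~ bnd len (fun i => Z i /\ A i) /\ ~ bnd len (fun i => Z i /\ ~ A i).
  move=> Z; case: (classic (bnd len Z)) => hZ.
    by exists (fun _ => True).
  apply: NNPP => hno; apply: hne; exists Z; split => // A.
  apply: NNPP => hA; apply: hno; exists A => _.
  by split => h; apply: hA; [left|right].
case/(@choice_fun (I -> Prop) (I -> Prop)): hsplit => phi hphi.
pose step (Z : I -> Prop) := fun i => Z i /\ ~ phi Z i.
pose Ys n := iter n step Y.
have nbYs : forall n, ~ bnd len (Ys n).
  elim=> [|n IH] //.
  have [_ h2] := hphi _ IH; exact: h2.
pose As n := fun i => Ys n i /\ phi (Ys n) i.
have dec : forall m n i, Ys (n + m) i -> Ys m i.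
  move=> m; elim=> [|n IH] i //=.
  move=> /= -[h _]; exact: (IH i h).
apply: (hL2 As).
  move=> m n i; wlog: m n / (m < n)%N.
    move=> hw hm hn; case: (ltngtP m n) => [lt|lt|//].
      by apply: hw.
    by symmetry; apply: hw.
  move=> lt [_ hpm] [hn _].
  have : Ys m.+1 i by apply: (dec _ (n - m.+1)); rewrite subnK.
  by move=> -[].
move=> k; by case: (hphi _ (nbYs k)).
Qed.


Fixpoint useq (I : Type) (step : nat -> (I -> Prop) -> (I -> Prop)) (n : nat) : I -> Prop :=
  match n with 0 => fun _ => False | S k => step k (useq step k) end.

Lemma ultra_bnd (gT : finGroupType) (I : Type) len (hl : @is_len gT I len)
  (Y0 : I -> Prop) : ultra len Y0 -> bnd len Y0.
Proof.
move=> hu; apply: NNPP => nbY.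
have hl' := hl; case: hl' => h0 h1 hm hi.
case: (classic (exists S, forall A : I -> Prop, bnd len (fun i => Y0 i /\ A i) ->
          forall f, supp_in (fun i => Y0 i /\ A i) f -> (len f <= S)%R)) => [[S hS]|hb].
  apply nbY.
  pose e (g : gT) := fun i => pick (Y0 i) g 1%g.
  exists (S + sumR (index_enum gT) (fun g => len (e g)))%R => f hf.
  have [g hg] : exists g, ~ bnd len (fun i => Y0 i /\ f i = g).
    apply: NNPP => hno; apply: nbY.
    apply: (@bnd_sub _ _ _ _ (fun i => exists2 g, g \in index_enum gT & (fun g i => Y0 i /\ f i = g) g i)).
      by move=> i hY; exists (f i); rewrite ?mem_index_enum.
    apply: bnd_bigunion => // g _; apply: NNPP => hg; apply: hno; by exists g.
  have hc : bnd len (fun i => Y0 i /\ ~ f i = g).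
    by case: (hu (fun i => f i = g)).
  pose f' := fun i => ((e g i)^-1 * f i)%g.
  have sf' : supp_in (fun i => Y0 i /\ ~ f i = g) f'.
    move=> i hn; rewrite /f' /e; case: (classic (Y0 i)) => hY.
      rewrite pickT //; have -> : f i = g by apply: NNPP => hne; apply: hn.
      by rewrite mulVg.
    by rewrite pickF // invg1 mul1g hf.
  have -> : f = prod_mul (e g) f'.
    by apply: functional_extensionality => i; rewrite /prod_mul /f' mulKVg.
  have := hm (e g) f'; have := hS _ hc f' sf'.
  have h3 : (len (e g) <= sumR (index_enum gT) (fun g => len (e g)))%R :=
    @sumR_mem _ (index_enum gT) (fun g => len (e g)) g (fun b => h0 _) (mem_index_enum g).
  lra.
have hb' : forall S : R, exists p : (I -> Prop) * (I -> gT),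
    bnd len (fun i => Y0 i /\ p.1 i) /\ supp_in (fun i => Y0 i /\ p.1 i) p.2 /\ (len p.2 > S)%R.
  move=> S; apply: NNPP => hno; apply: hb; exists S => A hA f hf.
  apply: Rnot_lt_le => hlt; apply: hno; exists (A, f); split => //.
case/(@choice_fun R ((I -> Prop) * (I -> gT))): hb' => psi hpsi.
have : forall U : I -> Prop, exists M, bnd len U -> forall f, supp_in U f -> (len f <= M)%R.
  move=> U; case: (classic (bnd len U)) => [[M hM]|hn]; first by exists M.
  by exists 0%R.
case/(@choice_fun (I -> Prop) R) => Mb hMb.
pose step k (U : I -> Prop) := fun i => U i \/ (Y0 i /\ (psi (INR k + Mb U)%R).1 i).
pose Us := useq step.
have bUs : forall k, bnd len (Us k).
  elim=> [|k IH] /=; first by apply: bnd_empty.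
  apply: bnd_union => //.
  by case: (hpsi (INR k + Mb (Us k))%R).
have mono : forall k j i, Us k i -> Us (j + k) i.
  move=> k; elim=> [|j IH] i h //=; by left; apply: IH.
pose X k := fun i => Y0 i /\ (psi (INR k + Mb (Us k))%R).1 i /\ ~ Us k i.
pose g k := fun i => pick (Us k i) 1%g ((psi (INR k + Mb (Us k))%R).2 i).
have sg : forall k, supp_in (X k) (g k).
  move=> k i hn; rewrite /g /pick; case: excluded_middle_informative => // hU.
  case: (hpsi (INR k + Mb (Us k))%R) => _ [hs _]; apply: hs => -[hY hA].
  by apply: hn.
have lg : forall k, (INR k < len (g k))%R.
  move=> k; case: (hpsi (INR k + Mb (Us k))%R) => _ [hs hgt].
  move: hgt; rewrite (split_fun (Us k) (psi (INR k + Mb (Us k))%R).2) => hgt.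
  have := hm (fun i => pick (Us k i) ((psi (INR k + Mb (Us k))%R).2 i) 1%g) (g k).
  have := hMb (Us k) (bUs k) (fun i => pick (Us k i) ((psi (INR k + Mb (Us k))%R).2 i) 1%g).
  move=> /(_ (fun i hi => pickF _ _ hi)) h; rewrite /g => h2; lra.
have disj : forall m n i, X m i -> X n i -> m = n.
  move=> m n i; wlog: m n / (m < n)%N.
    move=> hw hm' hn'; case: (ltngtP m n) => [lt|lt|//].
      by apply: hw.
    by symmetry; apply: hw.
  move=> lt [hY [hA _]] [_ [_ hn']]; exfalso; apply: hn'.
  have -> : n = (n - m.+1 + m.+1)%N by rewrite subnK.
  by apply: mono => /=; right.
pose E := fun i => exists k, X (Nat.add k k) i.
case: (nat_big 0) => _ _.
case: (hu E) => [[M hM]|[M hM]].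
  case: (nat_big M) => n hn.
  have := hM (g (Nat.add n n)) (fun i hi => sg _ i (fun hx => hi (conj (proj1 hx) (ex_intro _ n hx)))).
  have := lg (Nat.add n n); have := le_INR n (Nat.add n n); move=> /(_ ltac:(lia)); lra.
case: (nat_big M) => n hn.
have hs : supp_in (fun i => Y0 i /\ ~ E i) (g (S (Nat.add n n))).
  move=> i hii; apply: sg => hx; apply: hii; split; first by case: hx.
  move=> [k hk]; have := disj _ _ _ hk hx; lia.
have := hM _ hs.
have := lg (S (Nat.add n n)); have := le_INR n (S (Nat.add n n)); move=> /(_ ltac:(lia)); lra.
Qed.


Theorem mainTheorem1 (gT : finGroupType) (I : Type) :
  perfect_group gT -> strongly_bounded (@prod_mul I gT) (@prod_one I gT).
Proof.
move=> hp X d act [hd0 [hsym htri]] [hone [hmul hiso]] x.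
pose len (f : I -> gT) := d (act f x) x.
have dge0 : forall a b, (0 <= d a b)%R.
  move=> a b; have := htri a b a; have := hsym a b.
  have : d a a = 0%R by apply/hd0.
  lra.
have hl : is_len len.
  split.
  - by move=> f; apply: dge0.
  - by rewrite /len; have -> := hone x; apply/hd0.
  - move=> f g; rewrite /len hmul.
    have := htri (act f (act g x)) (act f x) x; rewrite hiso; lra.
  - move=> f; rewrite /len.
    rewrite -(hiso f) -hmul.
    have -> : prod_mul f (fun i => (f i)^-1)%g = @prod_one I gT.
      by apply: functional_extensionality => i; rewrite /prod_mul mulgV.
    by rewrite hone hsym.
case: (perfect_dec hp) => Lg hLg.
have hL2 := @disj_family gT I len hl Lg hLg.
have hb : bnd len (fun _ => True).
  apply: NNPP => nb.
  case: (ultra_exists hl hL2 nb) => Y0 [nbY0 hu].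
  by apply: nbY0; apply: ultra_bnd.
case: hb => M hM.
exists (2 * M)%R => g h.
have := htri (act g x) x (act h x); rewrite (hsym x).
have := hM g ltac:(by move=> i []; constructor).
have := hM h ltac:(by move=> i []; constructor).
rewrite /len; lra.
Qed.
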